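(* The algebra $(\mathcal{T}_\bullet,\hat{\ast})$ is a free associative algebra, freely generated by the set of non-empty reduced set compositions in $\mathsf{Comp}=\bigcup_{n\ge0}\mathsf{Comp}_n$.
   Context: $[n]=\{1,\ldots,n\}$. A set composition of a finite set $S\subset\mathbb{N}$ is a tuple $(P_1,\ldots,P_k)$ of pairwise disjoint non-empty subsets with union $S$; $\mathsf{Comp}_n$ is the set of set compositions of $[n]$ ($\mathsf{Comp}_0=\{\text{empty tuple}\}$). $\mathcal{T}_n$ is the free $\mathbb{Z}$-module on $\mathsf{Comp}_n$, $\mathcal{T}_\bullet=\bigoplus_{n\ge0}\mathcal{T}_n$. For finite $S,T\subset\mathbb{N}$ with $|S|=|T|$, $\mathsf{is}_{S,T}$ maps a set composition of $S$ to one of $T$ by applying the order-preserving bijection $S\to T$ blockwise. For set compositions $P$ of $S$ and $Q$ of $T$ with $S\cap T=\emptyset$, $P\ast Q$ is the concatenated tuple. The symmetrized product is defined bilinearly, for $P\in\mathsf{Comp}_p$, $Q\in\mathsf{Comp}_q$, by $P\,\hat{\ast}\,Q=\sum\mathsf{is}_{[p],A}(P)\ast\mathsf{is}_{[q],B}(Q)$, summed over all ordered pairs $(A,B)$ with $A\sqcup B=[p+q]$, $|A|=p$, $|B|=q$; its unit is the empty tuple. A set composition $(P_1,\ldots,P_k)\in\mathsf{Comp}_n$ is reduced if there is no $(a,m)$ with $1\le a<k$, $m<n$ and $P_1\cup\cdots\cup P_a=[m]$. *)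

(* Defs.v *)
From mathcomp Require Import all_boot all_algebra.
From mathcomp Require Import finmap.
Set Implicit Arguments. Unset Strict Implicit. Unset Printing Implicit Defensive.
Import GRing.Theory.
Local Open Scope fset_scope.

Definition scomp := seq {fset nat}.

Definition natrange (n : nat) : {fset nat} := [fset i | i in iota 1 n].

Definition bunion (P : scomp) : {fset nat} := \bigcup_(B <- P) B.

Definition is_setcomp (S : {fset nat}) (P : scomp) : bool :=
  all (fun B => B != fset0) P
  && pairwise (fun A B => [disjoint A & B]) P
  && (bunion P == S).

Definition is_comp (n : nat) (P : scomp) : bool := is_setcomp (natrange n) P.

Definition in_Comp (P : scomp) : Prop := exists n, is_comp n P.

Definition reduced (n : nat) (P : scomp) : Prop :=
  ~ (exists a m, [/\ 1 <= a, a < size P, m < n & bunion (take a P) = natrange m]).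

(* is_{[p],A}: blockwise the order-preserving bijection [p] -> A,
   i |-> the i-th smallest element of A. *)
Definition relabel (A : {fset nat}) (P : scomp) : scomp :=
  map (fun B : {fset nat} =>
         [fset nth 0 (sort leq (enum_fset A)) i.-1 | i in B]) P.

(* the elements of T_bullet: finite formal Z-linear combinations *)
Definition Tel := seq (int * scomp).

Definition tcoef (x : Tel) (P : scomp) : int := (\sum_(e <- x | e.2 == P) e.1)%R.

Definition teq (x y : Tel) : Prop := forall P, tcoef x P = tcoef y P.

Definition valid (x : Tel) : Prop := forall e, e \in x -> in_Comp e.2.

Definition tscale (a : int) (x : Tel) : Tel := [seq ((a * e.1)%R, e.2) | e <- x].

Definition basis_el (P : scomp) : Tel := [:: (1%R, P)].

Definition tunit : Tel := basis_el [::].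

Definition deg (P : scomp) : nat := sumn (map (fun B : {fset nat} => #|` B|) P).

Definition ofin (N : nat) (A : {set 'I_N}) : {fset nat} :=
  [fset (val i).+1 | i in enum A].

(* the terms of P (hat-ast) Q, for P in Comp_p, Q in Comp_q:
   one term for each ordered pair (A,B), A \sqcup B = [p+q], |A| = p *)
Definition shuffle_terms (P Q : scomp) : seq scomp :=
  let p := deg P in let q := deg Q in
  [seq relabel (ofin A) P ++ relabel (ofin (~: A)) Q
  | A <- enum [set A : {set 'I_(p + q)} | #|A| == p]].

Definition tmul (x y : Tel) : Tel :=
  flatten [seq [seq ((e.1 * f.1)%R, R) | R <- shuffle_terms e.2 f.2] | e <- x, f <- y].

Definition monomial (w : seq scomp) : Tel := foldr (fun g m => tmul (basis_el g) m) tunit w.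

Definition lincomb (c : seq (int * seq scomp)) : Tel :=
  flatten [seq tscale e.1 (monomial e.2) | e <- c].

Definition generator (g : scomp) : Prop :=
  exists n, [/\ is_comp n g, g <> [::] & reduced n g].

(* Main.v *)
Require Import Defs.
From mathcomp Require Import all_boot all_algebra.
From mathcomp Require Import finmap.
From mathcomp Require Import zify ring.
Set Implicit Arguments. Unset Strict Implicit. Unset Printing Implicit Defensive.
Import GRing.Theory.

Section PartA.
Local Open Scope fset_scope.

Definition srt (A : {fset nat}) := sort leq (enum_fset A).
Definition phi (A : {fset nat}) (i : nat) := nth 0 (srt A) i.-1.
Definition rank (A : {fset nat}) (x : nat) := count (fun y => y <= x) (enum_fset A).

Lemma relabelE A P : relabel A P = map (fun B : {fset nat} => [fset phi A i | i in B]) P.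
Proof. by []. Qed.

Lemma srt_sorted A : sorted ltn (srt A).
Proof.
rewrite ltn_sorted_uniq_leq sort_uniq fset_uniq /=.
exact: (sort_sorted leq_total).
Qed.

Lemma size_srt A : size (srt A) = #|` A|.
Proof. by rewrite size_sort cardfE. Qed.

Lemma mem_srt A x : (x \in srt A) = (x \in A).
Proof. by rewrite mem_sort. Qed.

Lemma rank_srt A x : rank A x = count (fun y => y <= x) (srt A).
Proof. by rewrite /rank; apply/permP; rewrite perm_sym perm_sort. Qed.

Lemma count_nth_sorted s i : sorted ltn s -> i < size s ->
  count (fun y => y <= nth 0 s i) s = i.+1.
Proof.
elim: s i => [|y s IH] i //= Hs.
have Hs' : sorted ltn s := path_sorted Hs.
have Hall : all (fun z => y < z) s.
  by apply: (order_path_min ltn_trans Hs).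
case: i => [|i] /= Hi.
  rewrite leqnn /= add1n; congr _.+1.
  apply/eqP; rewrite -leqn0 leqNgt -has_count; apply/hasPn => z zs /=.
  by rewrite -ltnNge; move/allP: Hall => /(_ z zs).
rewrite IH //; have : y < nth 0 s i by move/allP: Hall; apply; apply: mem_nth.
by move/ltnW => ->.
Qed.

Lemma phi_in A i : 0 < i <= #|` A| -> phi A i \in A.
Proof.
case/andP=> i0 iA; rewrite /phi -mem_srt; apply: mem_nth.
by rewrite size_srt; case: i i0 iA.
Qed.

Lemma rank_phi A i : 0 < i <= #|` A| -> rank A (phi A i) = i.
Proof.
case/andP=> i0 iA; rewrite rank_srt /phi count_nth_sorted ?srt_sorted //.
  by rewrite prednK.
by rewrite size_srt; case: i i0 iA.
Qed.

Lemma rank_ex A x : x \in A -> exists2 i, 0 < i <= #|` A| & x = phi A i.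
Proof.
rewrite -mem_srt => xs; exists (index x (srt A)).+1.
  by rewrite /= -size_srt index_mem.
by rewrite /phi /= nth_index.
Qed.

Lemma phi_rank A x : x \in A -> phi A (rank A x) = x.
Proof. by case/rank_ex=> i Hi ->; rewrite rank_phi. Qed.

Lemma rank_bound A x : x \in A -> 0 < rank A x <= #|` A|.
Proof. by case/rank_ex=> i Hi ->; rewrite rank_phi. Qed.

Lemma phi_mono A i j : 0 < i <= #|` A| -> 0 < j <= #|` A| ->
  (phi A i <= phi A j) = (i <= j).
Proof.
case/andP=> i0 iA; case/andP=> j0 jA.
have Hs := srt_sorted A.
have Hin : forall k, 0 < k <= #|` A| -> k.-1 \in [pred n | n < size (srt A)].
  by move=> [|k] //= H; rewrite inE size_srt.
have Hi := Hin i (introT andP (conj i0 iA)).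
have Hj := Hin j (introT andP (conj j0 jA)).
case: (ltngtP i j) => [ij|ij|->]; last by rewrite !leqnn.
- apply: ltnW; rewrite /phi; apply: (sorted_ltn_nth ltn_trans 0 Hs _ _ Hi Hj).
  by case: i i0 iA ij Hi {Hin} => //; case: j j0 jA Hj.
- apply/negbTE; rewrite -ltnNge.
  rewrite /phi; apply: (sorted_ltn_nth ltn_trans 0 Hs _ _ Hj Hi).
  by case: i i0 iA ij Hi {Hin} => //; case: j j0 jA Hj.
Qed.

Lemma rank_mono A x y : x \in A -> y \in A -> (rank A x <= rank A y) = (x <= y).
Proof.
move=> xA yA; rewrite -{2}(phi_rank xA) -{2}(phi_rank yA).
by rewrite phi_mono ?rank_bound.
Qed.

Lemma rank_inj A : {in A &, injective (rank A)}.
Proof. by move=> x y xA yA e; rewrite -(phi_rank xA) e phi_rank. Qed.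

Lemma phi_inj A : {in [pred i | 0 < i <= #|` A|] &, injective (phi A)}.
Proof. by move=> i j Hi Hj e; rewrite -(rank_phi Hi) e rank_phi. Qed.

Lemma rank_size A x s : uniq s -> (forall y, (y \in s) = (y \in A) && (y <= x)) ->
  rank A x = size s.
Proof.
move=> us Hs; rewrite /rank -size_filter; apply: perm_size.
apply: uniq_perm; rewrite ?filter_uniq ?fset_uniq // => y.
by rewrite mem_filter Hs andbC.
Qed.

Lemma rank_all A x : (forall y, y \in A -> y <= x) -> rank A x = #|` A|.
Proof.
move=> H; rewrite /rank; apply/eqP; rewrite -all_count; apply/allP => y.
exact: H.
Qed.

Lemma mem_natrange n i : (i \in natrange n) = (0 < i <= n).
Proof.
apply/imfsetP/idP => [[x /= xi ->]|H]; first by move: xi; rewrite mem_iota add1n.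
by exists i => //=; rewrite mem_iota add1n.
Qed.

Lemma card_natrange n : #|` natrange n| = n.
Proof.
rewrite -(@rank_all _ n); last by move=> y; rewrite mem_natrange => /andP[].
rewrite (@rank_size _ _ (iota 1 n)) ?size_iota ?iota_uniq // => y.
rewrite mem_natrange mem_iota add1n ltnS; case: (0 < y); case: (y <= n) => //=.
Qed.

End PartA.

Section PartB.
Local Open Scope fset_scope.

Definition std (X : scomp) : scomp := map (fun B : {fset nat} => [fset rank (bunion X) x | x in B]) X.

Definition sc (P : scomp) : bool :=
  all (fun B => B != fset0) P && pairwise (fun A B => [disjoint A & B]%fset) P.

Lemma is_setcompE S P : is_setcomp S P = sc P && (bunion P == S).
Proof. by []. Qed.

Lemma bunion_nil : bunion [::] = fset0.
Proof. by rewrite /bunion big_nil. Qed.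

Lemma bunion_cons B P : bunion (B :: P) = B `|` bunion P.
Proof. by rewrite /bunion big_cons. Qed.

Lemma bunion_cat P Q : bunion (P ++ Q) = bunion P `|` bunion Q.
Proof.
elim: P => [|B P IH] /=; first by rewrite bunion_nil fset0U.
by rewrite !bunion_cons IH fsetUA.
Qed.

Lemma mem_bunion (x : nat) (P : scomp) : (x \in bunion P) = has (fun B : {fset nat} => x \in B) P.
Proof.
elim: P => [|B P IH] /=; first by rewrite bunion_nil in_fset0.
by rewrite bunion_cons in_fsetU IH.
Qed.

Lemma bunion_sub (B : {fset nat}) (P : scomp) : B \in P -> {subset B <= bunion P}.
Proof. by move=> BP x xB; rewrite mem_bunion; apply/hasP; exists B. Qed.

Lemma bunion_map (f : nat -> nat) P :
  bunion (map (fun B : {fset nat} => [fset f x | x in B]) P) = [fset f x | x in bunion P].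
Proof.
elim: P => [|B P IH] /=; first by rewrite !bunion_nil imfset0.
by rewrite !bunion_cons IH imfsetU.
Qed.

Lemma deg_cons B P : deg (B :: P) = (#|` B| + deg P)%N.
Proof. by []. Qed.

Lemma deg_cat P Q : deg (P ++ Q) = (deg P + deg Q)%N.
Proof. by rewrite /deg map_cat sumn_cat. Qed.

Lemma disj_bunion B P :
  all (fun C => [disjoint B & C]%fset) P = [disjoint B & bunion P]%fset.
Proof.
elim: P => [|C P IH] /=; first by rewrite bunion_nil fdisjointX0.
by rewrite bunion_cons fdisjointXU IH.
Qed.

Lemma sc_cons B P : sc (B :: P) = [&& B != fset0, [disjoint B & bunion P]%fset & sc P].
Proof.
rewrite /sc pairwise_cons /= -disj_bunion.
by case: (B != fset0); case: (all _ P); case: (all _ P) => //=.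
Qed.

Lemma sc_cat P Q : sc (P ++ Q) = [&& sc P, sc Q & [disjoint bunion P & bunion Q]%fset].
Proof.
elim: P => [|B P IH] /=; first by rewrite bunion_nil fdisjoint0X andbT.
rewrite !sc_cons IH bunion_cat fdisjointXU bunion_cons fdisjointUX.
by case: (B != fset0); case: [disjoint B & bunion P]%fset; case: [disjoint B & bunion Q]%fset;
  case: (sc P); case: (sc Q); case: [disjoint bunion P & bunion Q]%fset.
Qed.

Lemma card_disjU (A B : {fset nat}) : [disjoint A & B]%fset -> #|` A `|` B| = (#|` A| + #|` B|)%N.
Proof. by move=> /eqP dAB; rewrite -cardfsUI dAB cardfs0 addn0. Qed.

Lemma deg_sc P : sc P -> deg P = #|` bunion P|.
Proof.
elim: P => [|B P IH]; first by rewrite bunion_nil cardfs0.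
rewrite sc_cons => /and3P[_ d sP].
by rewrite deg_cons IH // bunion_cons card_disjU.
Qed.

Lemma sc_take a P : sc P -> sc (take a P).
Proof. by rewrite -{1}(cat_take_drop a P) sc_cat => /and3P[]. Qed.

Lemma sc_drop a P : sc P -> sc (drop a P).
Proof. by rewrite -{1}(cat_take_drop a P) sc_cat => /and3P[]. Qed.

Lemma disj_take_drop a P : sc P -> [disjoint bunion (take a P) & bunion (drop a P)]%fset.
Proof. by rewrite -{1}(cat_take_drop a P) sc_cat => /and3P[]. Qed.

Lemma bunion_take_drop a P : bunion P = bunion (take a P) `|` bunion (drop a P).
Proof. by rewrite -bunion_cat cat_take_drop. Qed.

Lemma imfset_nonempty (f : nat -> nat) (B : {fset nat}) :
  ([fset f x | x in B] != fset0) = (B != fset0).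
Proof.
apply/idP/idP.
  by apply: contraNN => /eqP ->; rewrite imfset0.
case/fset0Pn => x xB; apply/fset0Pn; exists (f x); exact: in_imfset.
Qed.

Lemma imfset_disj (f : nat -> nat) (U B C : {fset nat}) :
  {in U &, injective f} -> {subset B <= U} -> {subset C <= U} ->
  [disjoint [fset f x | x in B] & [fset f x | x in C]] = [disjoint B & C]%fset.
Proof.
move=> fi BU CU; apply/fdisjointP/fdisjointP => H x.
  move=> xB; apply/negP => xC.
  by move: (H (f x) (in_imfset _ _ xB)); rewrite in_imfset.
case/imfsetP => /= b bB ->; apply/negP; case/imfsetP => /= c cC e.
have ebc : b = c by apply: fi => //; [exact: BU | exact: CU].
by move: (H b bB); rewrite ebc cC.
Qed.

Lemma sc_map (f : nat -> nat) P : {in bunion P &, injective f} -> sc P ->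
  sc (map (fun B : {fset nat} => [fset f x | x in B]) P).
Proof.
elim: P => [|B P IH] // fi; rewrite /= !sc_cons imfset_nonempty bunion_map.
case/and3P=> -> d sP /=; rewrite IH ?andbT //; last first.
  by move=> x y xP yP; apply: fi; rewrite bunion_cons in_fsetU ?xP ?yP orbT.
rewrite (@imfset_disj f (bunion (B :: P))) // => x; rewrite bunion_cons in_fsetU.
  by move=> ->.
by move=> ->; rewrite orbT.
Qed.

Lemma deg_map (f : nat -> nat) P : {in bunion P &, injective f} ->
  deg (map (fun B : {fset nat} => [fset f x | x in B]) P) = deg P.
Proof.
elim: P => [|B P IH] // fi; rewrite /= !deg_cons IH; last first.
  by move=> x y xP yP; apply: fi; rewrite bunion_cons in_fsetU ?xP ?yP orbT.
congr (_ + _)%N; apply/eqP/card_in_imfsetP => x y xB yB; apply: fi;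
  by rewrite bunion_cons in_fsetU ?xB ?yB.
Qed.

Lemma size_std X : size (std X) = size X.
Proof. by rewrite size_map. Qed.

Lemma size_relabel A X : size (relabel A X) = size X.
Proof. by rewrite size_map. Qed.

Lemma rank_image U : [fset rank U x | x in U] = natrange #|` U|.
Proof.
apply/fsetP => i; rewrite mem_natrange; apply/imfsetP/idP => [[x /= xU ->]|Hi].
  exact: rank_bound.
by exists (phi U i); [exact: phi_in | rewrite rank_phi].
Qed.

Lemma phi_image U : [fset phi U i | i in natrange #|` U|] = U.
Proof.
apply/fsetP => x; apply/imfsetP/idP => [[i /= iU ->]|xU].
  by apply: phi_in; rewrite -mem_natrange.
by exists (rank U x); [rewrite /= mem_natrange rank_bound | rewrite phi_rank].
Qed.

Lemma bunion_std X : bunion (std X) = natrange #|` bunion X|.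
Proof. by rewrite /std bunion_map rank_image. Qed.

Lemma sc_std X : sc X -> sc (std X).
Proof. by apply: sc_map; apply: rank_inj. Qed.

Lemma std_comp X : sc X -> is_setcomp (natrange #|` bunion X|) (std X).
Proof. by move=> sX; rewrite is_setcompE sc_std // bunion_std eqxx. Qed.

Lemma deg_std X : deg (std X) = deg X.
Proof. by apply: deg_map; apply: rank_inj. Qed.

Lemma relabel_std X : relabel (bunion X) (std X) = X.
Proof.
rewrite relabelE /std -map_comp -[RHS]map_id. apply/eq_in_map => B BX /=.
rewrite -imfset_comp; apply/fsetP => x; apply/imfsetP/idP => [[y /= yB ->]|xB].
  by rewrite phi_rank //; apply: (bunion_sub BX).
by exists x => //=; rewrite phi_rank //; apply: (bunion_sub BX).
Qed.

Lemma bunion_relabel A P : bunion P = natrange #|` A| -> bunion (relabel A P) = A.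
Proof. by move=> e; rewrite relabelE bunion_map e phi_image. Qed.

Lemma std_relabel A P : is_setcomp (natrange #|` A|) P -> std (relabel A P) = P.
Proof.
rewrite is_setcompE => /andP[_ /eqP e].
rewrite /std bunion_relabel // relabelE -map_comp -[RHS]map_id.
apply/eq_in_map => B BP /=; rewrite -imfset_comp.
have Hi : forall i, i \in B -> 0 < i <= #|` A|.
  by move=> i iB; rewrite -mem_natrange -e; apply: (bunion_sub BP).
apply/fsetP => x; apply/imfsetP/idP => [[y /= yB ->]|xB].
  by rewrite rank_phi ?Hi.
by exists x => //=; rewrite rank_phi ?Hi.
Qed.

Lemma sc_relabel A P : is_setcomp (natrange #|` A|) P -> is_setcomp A (relabel A P).
Proof.
move=> H; move: (H); rewrite is_setcompE => /andP[sP /eqP e].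
rewrite is_setcompE bunion_relabel // eqxx andbT relabelE; apply: sc_map => //.
by rewrite e => i j; rewrite !mem_natrange; apply: phi_inj.
Qed.

Lemma deg_relabel A P : is_setcomp (natrange #|` A|) P -> deg (relabel A P) = deg P.
Proof.
rewrite is_setcompE => /andP[sP /eqP e].
by rewrite relabelE deg_map // e => i j; rewrite !mem_natrange; apply: phi_inj.
Qed.

Lemma deg_comp n P : is_comp n P -> deg P = n.
Proof.
by rewrite /is_comp is_setcompE => /andP[sP /eqP e]; rewrite deg_sc // e card_natrange.
Qed.

Lemma rank_comp U V x : {subset V <= U} -> x \in V ->
  rank [fset rank U y | y in V] (rank U x) = rank V x.
Proof.
move=> VU xV.
rewrite (@rank_size _ _ (map (rank U) (filter (fun y => y <= x) (enum_fset V)))).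
- by rewrite size_map size_filter.
- rewrite map_inj_in_uniq ?filter_uniq ?fset_uniq // => a b.
  rewrite !mem_filter => /andP[_ aV] /andP[_ bV]; apply: rank_inj; exact: VU.
move=> y; apply/mapP/idP => [[z] |].
  rewrite mem_filter => /andP[zx zV] ->; rewrite in_imfset //=.
  by rewrite rank_mono ?VU.
case/andP => /imfsetP [z /= zV ->]; rewrite rank_mono ?VU // => zx.
by exists z => //; rewrite mem_filter zx.
Qed.

Lemma std_sub U Z : {subset bunion Z <= U} ->
  std (map (fun B : {fset nat} => [fset rank U x | x in B]) Z) = std Z.
Proof.
move=> ZU; rewrite /std bunion_map -map_comp; apply/eq_in_map => B BZ /=.
rewrite -imfset_comp; apply/fsetP => x; apply/imfsetP/imfsetP => [[y /= yB ->]|[y /= yB ->]].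
  by exists y => //; rewrite rank_comp // (bunion_sub BZ).
by exists y => //=; rewrite rank_comp // (bunion_sub BZ).
Qed.

Lemma std_take a X : std (take a (std X)) = std (take a X).
Proof.
rewrite [std X]/std -map_take std_sub // => x xt; rewrite (bunion_take_drop a X) in_fsetU.
by rewrite xt.
Qed.

Lemma std_drop a X : std (drop a (std X)) = std (drop a X).
Proof.
rewrite [std X]/std -map_drop std_sub // => x xt; rewrite (bunion_take_drop a X) in_fsetU.
by rewrite xt orbT.
Qed.

Lemma rank_init U x : (forall y, 0 < y <= x -> y \in U) -> (forall y, y \in U -> 0 < y) ->
  rank U x = x.
Proof.
move=> H1 H2; rewrite (@rank_size _ _ (iota 1 x)) ?size_iota ?iota_uniq // => y.
rewrite mem_iota add1n ltnS; apply/idP/idP => [/andP[y0 yx]|/andP[yU yx]].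
  by rewrite H1 ?y0 ?yx.
by rewrite H2.
Qed.

Lemma rank_natrange n x : x \in natrange n -> rank (natrange n) x = x.
Proof.
rewrite mem_natrange => /andP[x0 xn]; apply: rank_init => y.
  by rewrite mem_natrange => /andP[-> /leq_trans ->].
by rewrite mem_natrange => /andP[].
Qed.

Lemma phi_natrange n i : 0 < i <= n -> phi (natrange n) i = i.
Proof.
move=> Hi; have Hi' : i \in natrange n by rewrite mem_natrange.
by rewrite -{1}(rank_natrange Hi') phi_rank.
Qed.

Lemma std_id n X : is_setcomp (natrange n) X -> std X = X.
Proof.
rewrite is_setcompE => /andP[_ /eqP e].
rewrite /std -[RHS]map_id; apply/eq_in_map => B BX /=; rewrite e.
apply/fsetP => x; apply/imfsetP/idP => [[y /= yB ->]|xB].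
  by rewrite rank_natrange // -e (bunion_sub BX).
by exists x => //; rewrite rank_natrange // -e (bunion_sub BX).
Qed.

Lemma relabel_id n X : is_setcomp (natrange n) X -> relabel (natrange n) X = X.
Proof.
move=> H; rewrite -{1}(std_id H); move: H; rewrite is_setcompE => /andP[_ /eqP e].
by rewrite -{1}e relabel_std.
Qed.

End PartB.

Section PartC.
Local Open Scope fset_scope.

Lemma mem_ofin N (A : {set 'I_N}) x :
  (x \in ofin A) = [exists i in A, x == (val i).+1].
Proof.
apply/imfsetP/existsP => [[i /= iA ->]|[i /andP[iA /eqP ->]]].
  by exists i; rewrite -mem_enum iA /=.
by exists i => //=; rewrite mem_enum.
Qed.

Lemma ofin_mem N (A : {set 'I_N}) (i : 'I_N) : ((val i).+1 \in ofin A) = (i \in A).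
Proof.
rewrite mem_ofin; apply/existsP/idP => [[j /andP[jA /eqP e]]|iA].
  by have -> : i = j by apply: val_inj; case: e.
by exists i; rewrite iA eqxx.
Qed.

Lemma ofin_range N (A : {set 'I_N}) x : x \in ofin A -> x \in natrange N.
Proof.
by rewrite mem_ofin mem_natrange => /existsP[i /andP[_ /eqP ->]] /=.
Qed.

Lemma card_ofin N (A : {set 'I_N}) : #|` ofin A| = #|A|.
Proof.
rewrite -(@rank_all _ N); last by move=> y /ofin_range; rewrite mem_natrange => /andP[].
rewrite (@rank_size _ _ (map (fun i : 'I_N => (val i).+1) (enum A))).
  by rewrite size_map -cardE.
  rewrite map_inj_uniq ?enum_uniq // => i j [] e; exact: val_inj.
move=> y; apply/mapP/idP => [[i iA ->]|/andP[yA _]].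
  by rewrite ofin_mem -mem_enum iA /=; case: i {iA}.
move: yA; rewrite mem_ofin => /existsP[i /andP[iA /eqP ->]].
by exists i; rewrite ?mem_enum.
Qed.

Lemma ofinC N (A : {set 'I_N}) : ofin (~: A) = natrange N `\` ofin A.
Proof.
apply/fsetP => x; rewrite in_fsetD.
case Hx: (x \in natrange N); last first.
  by rewrite andbF; apply/negbTE; apply: contraFN Hx; apply: ofin_range.
move: Hx; rewrite mem_natrange => /andP[x0 xN].
have xN' : x.-1 < N by rewrite prednK.
have -> : x = (val (Ordinal xN')).+1 by rewrite /= prednK.
by rewrite !ofin_mem inE andbT.
Qed.

Definition setof N (U : {fset nat}) : {set 'I_N} := [set i : 'I_N | (val i).+1 \in U].

Lemma ofin_setof N U : {subset U <= natrange N} -> ofin (setof N U) = U.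
Proof.
move=> UN; apply/fsetP => x; apply/idP/idP.
  by rewrite mem_ofin => /existsP[i /andP[]]; rewrite inE => iU /eqP ->.
move=> xU; have := UN x xU; rewrite mem_natrange => /andP[x0 xN].
have xN' : x.-1 < N by rewrite prednK.
have -> : x = (val (Ordinal xN')).+1 by rewrite /= prednK.
by rewrite ofin_mem inE /= prednK.
Qed.

Lemma setof_ofin N (A : {set 'I_N}) : setof N (ofin A) = A.
Proof. by apply/setP => i; rewrite inE ofin_mem. Qed.

Lemma count_unique (T : eqType) (a : pred T) (l : seq T) y0 :
  uniq l -> (forall y, y \in l -> a y -> y = y0) -> count a l = (y0 \in l) && a y0.
Proof.
elim: l => [|y l IH] //= /andP[yl ul] H.
rewrite IH //; last by move=> z zl; apply: H; rewrite in_cons zl orbT.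
rewrite in_cons; case ay: (a y).
  have ey := H y (mem_head _ _) ay; subst y; rewrite eqxx ay /=.
  by rewrite (negbTE yl).
case: (y0 =P y) => [ey|_] //=; subst y; rewrite ay /=.
by rewrite (negbTE yl).
Qed.

Definition cond (P Q R : scomp) : bool :=
  [&& is_comp (deg P + deg Q)%N R, std (take (size P) R) == P & std (drop (size P) R) == Q].

Lemma comp_sc n P : is_comp n P -> sc P.
Proof. by rewrite /is_comp is_setcompE => /andP[]. Qed.

Lemma comp_bunion n P : is_comp n P -> bunion P = natrange n.
Proof. by rewrite /is_comp is_setcompE => /andP[_ /eqP]. Qed.

Lemma shuffle_count P Q R : is_comp (deg P) P -> is_comp (deg Q) Q ->
  count_mem R (shuffle_terms P Q) = cond P Q R.
Proof.
move=> cP cQ; rewrite /shuffle_terms count_map.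
set N := (deg P + deg Q)%N.
set F := fun A : {set 'I_N} => relabel (ofin A) P ++ relabel (ofin (~: A)) Q.
have HP : forall A : {set 'I_N}, #|A| = deg P -> is_setcomp (natrange #|` ofin A|) P.
  by move=> A cA; rewrite card_ofin cA.
have cAc : forall A : {set 'I_N}, #|A| = deg P -> #|~: A| = deg Q.
  by move=> A cA; move: (cardsC A); rewrite card_ord cA /N => /eqP; rewrite eqn_add2l => /eqP.
have HQ : forall A : {set 'I_N}, #|A| = deg P -> is_setcomp (natrange #|` ofin (~: A)|) Q.
  by move=> A cA; rewrite card_ofin cAc.
set U := bunion (take (size P) R).
rewrite (@count_unique _ _ _ (setof N U)) ?enum_uniq //; last first.
  move=> A; rewrite mem_enum inE /preim /= => /eqP cA /eqP eR.
  rewrite /U -eR take_size_cat ?size_relabel // bunion_relabel ?setof_ofin //.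
  by move: (HP A cA); rewrite is_setcompE => /andP[_ /eqP].
rewrite mem_enum inE /preim /=; congr nat_of_bool.
apply/idP/idP.
- case/andP => /eqP cA /eqP <-.
  have sPr := sc_relabel (HP _ cA); have sQr := sc_relabel (HQ _ cA).
  rewrite /cond take_size_cat ?drop_size_cat ?size_relabel // !std_relabel ?HP ?HQ //.
  rewrite !eqxx !andbT /is_comp is_setcompE sc_cat bunion_cat.
  move: sPr sQr; rewrite !is_setcompE => /andP[-> /eqP ->] /andP[-> /eqP ->] /=.
  rewrite ofinC; apply/andP; split.
    by apply/fdisjointP => x xA; rewrite in_fsetD xA.
  apply/eqP/fsetP => x; rewrite in_fsetU in_fsetD.
  by case xA: (x \in ofin _) => //=; rewrite (ofin_range xA).
- case/and3P => cR /eqP sT /eqP sD.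
  have sR := comp_sc cR; have bR := comp_bunion cR.
  have UN : {subset U <= natrange N}.
    by move=> x xU; rewrite -bR (bunion_take_drop (size P)) in_fsetU xU.
  have cU : #|` U| = deg P.
    have := bunion_std (take (size P) R); rewrite sT (comp_bunion cP) => /(congr1 (fun S => #|` S|)).
    by rewrite !card_natrange.
  have eA : ofin (setof N U) = U by rewrite ofin_setof.
  rewrite -card_ofin eA cU eqxx /= /F.
  rewrite ofinC eA.
  have -> : natrange N `\` U = bunion (drop (size P) R).
    apply/fsetP => x; rewrite in_fsetD -bR (bunion_take_drop (size P)) in_fsetU.
    case xU: (x \in U); last by rewrite /=.
    have := disj_take_drop (size P) sR; move/fdisjointP => /(_ x xU) /negbTE.
    by rewrite /U => ->.
  by rewrite -{1}sT -sD /U !relabel_std cat_take_drop.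
Qed.

End PartC.

Section PartD.
Local Open Scope ring_scope.

Definition lin (L : Tel) (h : scomp -> int) : int := \sum_(e <- L) e.1 * h e.2.

Lemma tcoefE L P : tcoef L P = lin L (fun S0 => (S0 == P)%:R).
Proof.
rewrite /tcoef /lin big_mkcond /=; apply: eq_bigr => e _.
by case: (e.2 == P); rewrite ?mulr1 ?mulr0.
Qed.

Lemma lin_cat L1 L2 h : lin (L1 ++ L2) h = lin L1 h + lin L2 h.
Proof. by rewrite /lin big_cat. Qed.

Lemma lin_flatten Ls h : lin (flatten Ls) h = \sum_(L <- Ls) lin L h.
Proof. by rewrite /lin big_flatten. Qed.

Lemma lin_pair c l h : lin [seq (c, S0) | S0 <- l] h = c * \sum_(S0 <- l) h S0.
Proof. by rewrite /lin big_map mulr_sumr. Qed.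

Lemma lin_tmul x y h : lin (tmul x y) h =
  \sum_(e <- x) \sum_(f <- y) e.1 * f.1 * \sum_(S0 <- shuffle_terms e.2 f.2) h S0.
Proof.
rewrite /tmul lin_flatten big_flatten /= big_map; apply: eq_bigr => e _.
rewrite big_map; apply: eq_bigr => f _; exact: lin_pair.
Qed.

Lemma Posz_sum (T : Type) (l : seq T) (F : T -> nat) :
  ((\sum_(i <- l) F i)%N)%:Z = \sum_(i <- l) (F i)%:Z.
Proof.
elim: l => [|a l IH]; first by rewrite !big_nil.
by rewrite !big_cons PoszD IH.
Qed.

Lemma sum_count (T : eqType) (l : seq T) R :
  \sum_(S0 <- l) (S0 == R)%:R = (count_mem R l)%:Z :> int.
Proof.
elim: l => [|a l IH]; first by rewrite big_nil.
by rewrite big_cons IH /= PoszD; case: (a == R).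
Qed.

Lemma sum_bool (T : Type) (l : seq T) (a : pred T) :
  (\sum_(i <- l) a i)%N = count a l.
Proof. by elim: l => [|b l IH]; rewrite ?big_nil ?big_cons ?IH. Qed.

End PartD.

Section PartE.

Definition cond3 (P Q S R : scomp) : bool :=
  [&& is_comp (deg P + deg Q + deg S) R, std (take (size P) R) == P,
      std (take (size Q) (drop (size P) R)) == Q &
      std (drop (size P + size Q) R) == S].

Lemma comp_std Y : sc Y -> is_comp (deg Y) (std Y).
Proof. by move=> sY; rewrite /is_comp deg_sc //; apply: std_comp. Qed.

Lemma deg_take_drop a Y : deg Y = deg (take a Y) + deg (drop a Y).
Proof. by rewrite -deg_cat cat_take_drop. Qed.

Lemma condL P Q S R :
  cond P Q (std (take (size P + size Q) R)) && cond (std (take (size P + size Q) R)) S R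
  = cond3 P Q S R.
Proof.
set a := size P; set b := size Q; set Y := take (a + b) R.
have TY : take a Y = take a R by rewrite /Y take_takel // leq_addr.
have DY : drop a Y = take b (drop a R) by rewrite take_drop addnC.
have E1 : std (take a (std Y)) = std (take a R) by rewrite std_take TY.
have E2 : std (drop a (std Y)) = std (take b (drop a R)) by rewrite std_drop DY.
rewrite /cond /cond3 E1 E2 size_std.
have sY : forall R', std (take a R') = P -> std (take b (drop a R')) = Q -> a + b <= size R'.
  move=> R' /(congr1 size) + /(congr1 size); rewrite !size_std !size_take size_drop -/b -/a.
  clearbody a b; case: ltnP => H1 H2; case: ltnP => H3 H4; lia.
apply/idP/idP.
- case/andP => /and3P[cT /eqP e1 /eqP e2] /and3P[cR _ /eqP e3].
  move: cR e3; rewrite (deg_comp cT) /Y size_takel ?(sY _ e1 e2) // => cR e3.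
  by rewrite cR e1 e2 e3 !eqxx.
- case/and4P => cR /eqP e1 /eqP e2 /eqP e3.
  have sR := comp_sc cR.
  have dY : deg Y = deg P + deg Q.
    by rewrite (deg_take_drop a) TY DY -e1 -e2 !deg_std.
  have cT : is_comp (deg P + deg Q) (std Y) by rewrite -dY comp_std // sc_take.
  by rewrite cT e1 e2 (deg_comp cT) /Y size_takel ?(sY _ e1 e2) // cR e3 !eqxx.
Qed.

Lemma condR P Q S R :
  cond Q S (std (drop (size P) R)) && cond P (std (drop (size P) R)) R
  = cond3 P Q S R.
Proof.
set a := size P; set b := size Q; set D := drop a R.
have E1 : std (take b (std D)) = std (take b D) by rewrite std_take.
have E2 : std (drop b (std D)) = std (drop (a + b) R) by rewrite std_drop /D drop_drop addnC.
rewrite /cond /cond3 E1 E2.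
apply/idP/idP.
- case/andP => /and3P[cT /eqP e1 /eqP e2] /and3P[cR /eqP e3 _].
  move: cR; rewrite (deg_comp cT) addnA => cR.
  by rewrite cR e1 e2 e3 !eqxx.
- case/and4P => cR /eqP e1 /eqP e2 /eqP e3.
  have sR := comp_sc cR.
  have dD : deg D = deg Q + deg S.
    by rewrite (deg_take_drop b D) -e2 -e3 !deg_std /D drop_drop (addnC b a).
  have cT : is_comp (deg Q + deg S) (std D) by rewrite -dD comp_std // sc_drop.
  by rewrite cT e1 e2 (deg_comp cT) e3 addnA cR !eqxx.
Qed.

Lemma size_cond P Q T : cond P Q T -> size T = size P + size Q.
Proof.
case/and3P => _ /eqP e1 /eqP e2.
move: (congr1 size e1) (congr1 size e2); rewrite !size_std => h1 h2.
by rewrite -(cat_take_drop (size P) T) size_cat h1 h2.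
Qed.

Lemma cond_comp P Q T : cond P Q T -> is_comp (deg T) T.
Proof. by case/and3P => cT _ _; rewrite (deg_comp cT). Qed.

Lemma shuffle_uniq P Q : is_comp (deg P) P -> is_comp (deg Q) Q -> uniq (shuffle_terms P Q).
Proof.
move=> cP cQ; apply: count_mem_uniq => R.
have -> : (R \in shuffle_terms P Q) = (0 < count_mem R (shuffle_terms P Q)).
  by rewrite -has_count has_pred1.
by rewrite shuffle_count //; case: (cond P Q R).
Qed.

Lemma mem_shuffle P Q R : is_comp (deg P) P -> is_comp (deg Q) Q ->
  (R \in shuffle_terms P Q) = cond P Q R.
Proof.
move=> cP cQ; have := count_uniq_mem R (shuffle_uniq cP cQ).
by rewrite shuffle_count //; case: (cond P Q R); case: (R \in _).
Qed.

Lemma assoc_nat P Q S R : is_comp (deg P) P -> is_comp (deg Q) Q -> is_comp (deg S) S ->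
  (\sum_(T <- shuffle_terms P Q) count_mem R (shuffle_terms T S))%N =
  (\sum_(T <- shuffle_terms Q S) count_mem R (shuffle_terms P T))%N.
Proof.
move=> cP cQ cS.
rewrite (eq_big_seq (fun T => nat_of_bool (cond T S R))); last first.
  move=> T; rewrite mem_shuffle // => HT; rewrite shuffle_count //.
  exact: cond_comp HT.
rewrite [RHS](eq_big_seq (fun T => nat_of_bool (cond P T R))); last first.
  move=> T; rewrite mem_shuffle // => HT; rewrite shuffle_count //.
  exact: cond_comp HT.
rewrite !sum_bool.
rewrite (@count_unique _ _ _ (std (take (size P + size Q) R))) ?shuffle_uniq //; last first.
  move=> T; rewrite mem_shuffle // => HT /and3P[_ /eqP e _].
  by rewrite -e (size_cond HT).
rewrite [RHS](@count_unique _ _ _ (std (drop (size P) R))) ?shuffle_uniq //; last first.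
  by move=> T _ /and3P[_ _ /eqP e].
by rewrite !mem_shuffle // condL condR.
Qed.

End PartE.

Section PartF.

Lemma in_Comp_deg P : in_Comp P -> is_comp (deg P) P.
Proof. by case=> n cn; rewrite (deg_comp cn). Qed.

Lemma natrange0 : natrange 0 = fset0.
Proof. by apply/fsetP => x; rewrite mem_natrange in_fset0; case: x. Qed.

Lemma comp_nil : is_comp 0 [::].
Proof. by rewrite /is_comp is_setcompE bunion_nil natrange0 eqxx. Qed.

Lemma std_nil : std [::] = [::].
Proof. by []. Qed.

Local Open Scope ring_scope.

Lemma tmul_assoc x y z : valid x -> valid y -> valid z ->
  teq (tmul (tmul x y) z) (tmul x (tmul y z)).
Proof.
move=> vx vy vz R; rewrite !tcoefE.
set d := fun S0 : scomp => ((S0 == R)%:R : int).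
have Hd : forall l, \sum_(S0 <- l) d S0 = (count_mem R l)%:Z by move=> l; exact: sum_count.
transitivity (\sum_(e <- x) \sum_(f <- y) \sum_(g <- z) e.1 * f.1 * g.1 *
  ((\sum_(T <- shuffle_terms e.2 f.2) count_mem R (shuffle_terms T g.2))%N)%:Z).
- rewrite lin_tmul.
  transitivity (lin (tmul x y) (fun T => \sum_(g <- z) g.1 * (count_mem R (shuffle_terms T g.2))%:Z)).
    rewrite /lin; apply: eq_bigr => u _; rewrite mulr_sumr; apply: eq_bigr => g _.
    by rewrite Hd mulrA.
  rewrite lin_tmul; apply: eq_bigr => e _; apply: eq_bigr => f _.
  rewrite exchange_big mulr_sumr; apply: eq_bigr => g _.
  by rewrite Posz_sum !mulr_sumr; apply: eq_bigr => T _; ring.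
- symmetry; rewrite lin_tmul; apply: eq_big_seq => e ex.
  transitivity (e.1 * lin (tmul y z) (fun T => (count_mem R (shuffle_terms e.2 T))%:Z)).
    by rewrite /lin mulr_sumr; apply: eq_bigr => v _; rewrite Hd mulrA.
  rewrite lin_tmul mulr_sumr; apply: eq_big_seq => f fy.
  rewrite mulr_sumr; apply: eq_big_seq => g gz.
  rewrite (@assoc_nat e.2 f.2 g.2 R) ?in_Comp_deg ?(vx e) ?(vy f) ?(vz g) //.
  by rewrite Posz_sum !mulr_sumr; apply: eq_bigr => T _; ring.
  - exact: vx.
  - exact: vy.
  - exact: vz.
Qed.

Lemma cond_unit_l Q R : is_comp (deg Q) Q -> cond [::] Q R = (Q == R).
Proof.
move=> cQ; rewrite /cond /= take0 drop0 std_nil eqxx /= add0n.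
case: (Q =P R) => [<-|nQR]; first by rewrite cQ (std_id cQ) eqxx.
apply/negbTE/negP => /andP[cR /eqP sR]; apply: nQR; by rewrite -sR (std_id cR).
Qed.

Lemma cond_unit_r P R : is_comp (deg P) P -> cond P [::] R = (P == R).
Proof.
move=> cP; rewrite /cond /= addn0.
case: (P =P R) => [<-|nPR].
  by rewrite cP take_size drop_size (std_id cP) std_nil !eqxx.
apply/negbTE/negP => /and3P[cR /eqP sT /eqP sD]; apply: nPR.
have dR : drop (size P) R = [::].
  by apply/eqP; rewrite -size_eq0 -(size_std (drop _ _)) sD.
move: sT; rewrite take_oversize ?(std_id cR) //.
by move/eqP: dR; rewrite -size_eq0 size_drop subn_eq0.
Qed.

Lemma tmul_unit x : valid x -> teq (tmul tunit x) x /\ teq (tmul x tunit) x.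
Proof.
move=> vx; split => R; rewrite !tcoefE lin_tmul.
- rewrite big_cons big_nil addr0 /lin; apply: eq_big_seq => f fx /=.
  have cf := in_Comp_deg (vx f fx).
  rewrite sum_count shuffle_count ?comp_nil //.
  by rewrite cond_unit_l //; case: (f.2 == R); ring.
- rewrite /lin; apply: eq_big_seq => e ex /=.
  rewrite big_cons big_nil addr0 /=.
  have ce := in_Comp_deg (vx e ex).
  rewrite sum_count shuffle_count ?comp_nil //.
  by rewrite cond_unit_r //; case: (e.2 == R); ring.
Qed.

End PartF.

Section PartG.
Local Open Scope fset_scope.
Local Open Scope nat_scope.

Definition cutp (R : scomp) (a : nat) : bool :=
  bunion (take a R) == natrange #|` bunion (take a R)|.

Definition nf (R : scomp) : nat := count (cutp R) (iota 1 (size R)).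

Definition sconcat (g T : scomp) : scomp :=
  g ++ relabel (natrange (deg g + deg T) `\` natrange (deg g)) T.

Lemma bunion_drop_eq n a R : is_comp n R ->
  bunion (drop a R) = natrange n `\` bunion (take a R).
Proof.
move=> cR; have bR := comp_bunion cR; have sR := comp_sc cR.
apply/fsetP => x; rewrite in_fsetD -bR [bunion R](bunion_take_drop a) in_fsetU.
case xU: (x \in bunion (take a R)) => /=.
  have := disj_take_drop a sR; move/fdisjointP => /(_ x xU) /negbTE.
  by move=> ->.
by [].
Qed.

Lemma rank_restrict W V x : {subset V <= W} -> x \in V ->
  (forall y, y \in W -> y <= x -> y \in V) -> rank W x = rank V x.
Proof.
move=> VW xV H.
rewrite (@rank_size W x (filter (fun y => y <= x) (enum_fset V))).
  by rewrite size_filter.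
  by rewrite filter_uniq ?fset_uniq.
move=> y; rewrite mem_filter andbC; apply/idP/idP => [/andP[yV yx]|/andP[yW yx]].
  by rewrite VW.
by rewrite H.
Qed.

Lemma imfset_id_in (f : nat -> nat) (V : {fset nat}) :
  {in V, forall x, f x = x} -> [fset f x | x in V] = V.
Proof.
move=> H; apply/fsetP => x; apply/imfsetP/idP => [[y /= yV ->]|xV].
  by rewrite H.
by exists x => //; rewrite H.
Qed.

Lemma cut_small g T R a : is_comp (deg g) g -> reduced (deg g) g -> cond g T R ->
  0 < a < size g -> ~~ cutp R a.
Proof.
move=> cg rg /and3P[cR /eqP e1 _] /andP[a0 ak]; apply/negP => /eqP cut.
set X := take (size g) R in e1.
set V := bunion (take a R) in cut.
have TX : take a R = take a X by rewrite /X take_takel // ltnW.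
set U := bunion X.
have bR := comp_bunion cR.
have VU : {subset V <= U} by move=> x; rewrite /V TX /U (bunion_take_drop a X) in_fsetU => ->.
have Un : {subset U <= natrange (deg g + deg T)}.
  by move=> x; rewrite -bR (bunion_take_drop (size g) R) in_fsetU => ->.
have [m Vm] : exists m, V = natrange m by exists #|` V|.
have bg : bunion (take a g) = V.
  rewrite -e1 /std -map_take bunion_map -TX -/V; apply: imfset_id_in => x xV.
  have xm : x <= m by move: xV; rewrite Vm mem_natrange => /andP[].
  apply: rank_init => [y /andP[y0 yx]|y yU].
    by apply: VU; rewrite Vm mem_natrange y0 /= (leq_trans yx).
  by have := Un y yU; rewrite mem_natrange => /andP[].
apply: rg; exists a, m; split => //; last by rewrite bg.
have sg := comp_sc cg.
rewrite (deg_take_drop a g) (deg_sc (sc_take a sg)) bg Vm card_natrange.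
have : drop a g != [::] by rewrite -size_eq0 size_drop subn_eq0 -ltnNge.
have sd := sc_drop a sg; case: (drop a g) sd => [|B D] //.
rewrite sc_cons deg_cons => /and3P[Bn _ _] _.
by rewrite -cardfs_gt0 in Bn; lia.
Qed.

Lemma cut_at g T R : cond g T R ->
  cutp R (size g) = (bunion (take (size g) R) == natrange (deg g)).
Proof.
case/and3P => cR /eqP e1 _.
rewrite /cutp -(deg_sc (sc_take _ (comp_sc cR))) -deg_std e1.
by [].
Qed.

Lemma cut_shift g T R b : cond g T R -> cutp R (size g + b) -> cutp T b.
Proof.
move=> Hc; have sR := size_cond Hc; move: Hc.
case/and3P => cR /eqP e1 /eqP e2 /eqP cut.
set X := take (size g) R in e1 cut.
set Y := drop (size g) R in e2.
have sX : size X = size g by rewrite -e1 size_std.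
have TR : take (size g + b) R = X ++ take b Y.
  by rewrite -{1}(cat_take_drop (size g) R) -/X -/Y take_cat sX ltnNge leq_addr /= addKn.
move: cut; rewrite TR bunion_cat.
set U := bunion X; set V := bunion (take b Y); set W := bunion Y => cut.
have bR := comp_bunion cR; have sRc := comp_sc cR.
have VW : {subset V <= W} by move=> x; rewrite /V /W (bunion_take_drop b Y) in_fsetU => ->.
have Wn : {subset W <= natrange (deg g + deg T)}.
  by move=> x; rewrite -bR (bunion_take_drop (size g) R) in_fsetU -/Y => ->; rewrite orbT.
have dUW := disj_take_drop (size g) sRc.
have [m cm] : exists m, U `|` V = natrange m by exists #|` U `|` V|.
have key : forall x y, x \in V -> y \in W -> y <= x -> y \in V.
  move=> x y xV yW yx.
  have xm : x <= m.
    have : x \in U `|` V by rewrite in_fsetU xV orbT.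
    by rewrite cm mem_natrange => /andP[].
  have : y \in U `|` V.
    rewrite cm mem_natrange; have := Wn y yW; rewrite mem_natrange => /andP[-> _] /=.
    exact: (leq_trans yx).
  rewrite in_fsetU => /orP[yU|//].
  by move/fdisjointP: dUW => /(_ y yU); rewrite -/Y -/W yW.
have bT : bunion (take b T) = natrange #|` V|.
  rewrite -e2 /std -map_take bunion_map -/V -/W -(rank_image V).
  apply/fsetP => z; apply/imfsetP/imfsetP => [[x /= xV ->]|[x /= xV ->]].
    by exists x => //; apply: rank_restrict => // y yW yx; apply: (key x).
  by exists x => //; apply/esym; apply: rank_restrict => // y yW yx; apply: (key x).
by rewrite /cutp bT card_natrange.
Qed.

Lemma count_first (P : pred nat) k : 0 < k -> (forall a, 0 < a < k -> ~~ P a) ->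
  count P (iota 1 k) = P k.
Proof.
move=> k0 H; have -> : k = k.-1 + 1 by lia.
rewrite iotaD count_cat /= addn0 add1n addn1 prednK //.
have -> : count P (iota 1 k.-1) = 0.
  apply/eqP; rewrite -leqn0 leqNgt -has_count; apply/hasPn => a.
  by rewrite mem_iota => Ha; apply: H; lia.
by [].
Qed.

Lemma count_sub_in (P1 P2 : pred nat) s : (forall x, x \in s -> P1 x -> P2 x) ->
  count P1 s <= count P2 s.
Proof.
elim: s => [|x s IH] //= H.
apply: leq_add; last by apply: IH => y ys; apply: H; rewrite in_cons ys orbT.
by case e: (P1 x) => //; rewrite (H x (mem_head _ _) e).
Qed.

Lemma nf_split g T R : cond g T R -> g != [::] ->
  nf R = count (cutp R) (iota 1 (size g)) + count (fun b => cutp R (size g + b)) (iota 1 (size T)).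
Proof.
move=> Hc gn; rewrite /nf (size_cond Hc) iotaD count_cat; congr (_ + _).
by rewrite addnC iotaDl count_map.
Qed.

Lemma nf_le g T R : is_comp (deg g) g -> g != [::] -> reduced (deg g) g -> cond g T R ->
  nf R <= (bunion (take (size g) R) == natrange (deg g)) + nf T.
Proof.
move=> cg gn rg Hc; rewrite (nf_split Hc gn) count_first; last first.
- by move=> a Ha; apply: (cut_small cg rg Hc).
- by rewrite lt0n size_eq0.
rewrite (cut_at Hc) leq_add2l; apply: count_sub_in => b _.
exact: (cut_shift Hc).
Qed.

End PartG.

Section PartH.
Local Open Scope fset_scope.
Local Open Scope nat_scope.

Definition shset p q := natrange (p + q) `\` natrange p.

Lemma mem_shset p q x : (x \in shset p q) = (p < x <= p + q).
Proof.
rewrite /shset in_fsetD !mem_natrange.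
case: (ltnP p x) => H /=; first by rewrite (leq_ltn_trans _ H) ?andbT.
by case: (0 < x) => //=; rewrite H.
Qed.

Lemma card_shset p q : #|` shset p q| = q.
Proof.
rewrite /shset cardfsDS ?card_natrange ?addKn //.
by apply/fsubsetP => x; rewrite !mem_natrange => /andP[-> /leq_trans ->] //; rewrite leq_addr.
Qed.

Lemma phi_shift p q i : 0 < i <= q -> phi (shset p q) i = p + i.
Proof.
move=> Hi.
have Hin : p + i \in shset p q by rewrite mem_shset; lia.
have Hr : rank (shset p q) (p + i) = i.
  rewrite (@rank_size _ _ (iota p.+1 i)) ?size_iota ?iota_uniq // => y.
  rewrite mem_iota mem_shset; apply/idP/idP => /andP[]; lia.
by rewrite -{1}Hr phi_rank.
Qed.

Lemma sconcatE g T : sconcat g T = g ++ relabel (shset (deg g) (deg T)) T.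
Proof. by []. Qed.

Lemma sconcat_cond g T : is_comp (deg g) g -> is_comp (deg T) T -> cond g T (sconcat g T).
Proof.
move=> cg cT; rewrite /cond sconcatE.
have cTs : is_setcomp (natrange #|` shset (deg g) (deg T)|) T by rewrite card_shset.
have sr := sc_relabel cTs.
rewrite take_size_cat ?drop_size_cat // (std_id cg) std_relabel // !eqxx !andbT.
move: sr cg; rewrite /is_comp !is_setcompE => /andP[s1 /eqP b1] /andP[s2 /eqP b2].
rewrite sc_cat s1 s2 bunion_cat b1 b2 /=; apply/andP; split.
  by apply/fdisjointP => x; rewrite mem_shset mem_natrange => /andP[_ H]; lia.
apply/eqP/fsetP => x; rewrite in_fsetU mem_shset !mem_natrange.
apply/idP/idP; [case/orP => /andP[x0 x1]; lia | move=> /andP[x0 x1]; lia].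
Qed.

Lemma cond_sconcat_eq g T R : is_comp (deg g) g -> cond g T R ->
  bunion (take (size g) R) = natrange (deg g) -> R = sconcat g T.
Proof.
move=> cg Hc; move: (Hc) => /and3P[cR /eqP e1 /eqP e2] bU.
rewrite sconcatE -{1}(cat_take_drop (size g) R); congr (_ ++ _).
  by rewrite -{1}(relabel_std (take (size g) R)) e1 bU (relabel_id cg).
rewrite -{1}(relabel_std (drop (size g) R)) e2 (bunion_drop_eq _ cR) bU.
by [].
Qed.

Lemma nf_sconcat g T : is_comp (deg g) g -> g != [::] -> reduced (deg g) g ->
  is_comp (deg T) T -> nf (sconcat g T) = (nf T).+1.
Proof.
move=> cg gn rg cT.
have Hc := sconcat_cond cg cT.
rewrite (nf_split Hc gn) count_first; last first.
- by move=> a Ha; apply: (cut_small cg rg Hc).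
- by rewrite lt0n size_eq0.
rewrite (cut_at Hc) sconcatE take_size_cat // (comp_bunion cg) eqxx add1n.
congr _.+1; rewrite /nf; apply: eq_in_count => b; rewrite mem_iota => Hb /=.
apply/idP/idP; first by rewrite -sconcatE; apply: (cut_shift Hc).
rewrite /cutp => /eqP.
set m := #|` bunion (take b T)| => bT.
have mq : m <= deg T.
  case: m bT => // m bT.
  have : m.+1 \in bunion T.
    by rewrite (bunion_take_drop b T) in_fsetU bT mem_natrange leqnn.
  by rewrite (comp_bunion cT) mem_natrange => /andP[].
have -> : take (size g + b) (g ++ relabel (shset (deg g) (deg T)) T) =
          g ++ relabel (shset (deg g) (deg T)) (take b T).
  by rewrite take_cat ltnNge leq_addr /= addKn !relabelE -map_take.
have -> : bunion (g ++ relabel (shset (deg g) (deg T)) (take b T)) = natrange (deg g + m).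
  rewrite bunion_cat relabelE bunion_map bT (comp_bunion cg).
  apply/fsetP => x; rewrite in_fsetU !mem_natrange; apply/idP/idP.
    case/orP => [/andP[x0 xg]|/imfsetP[i /= Hi ->]]; first lia.
    by move: Hi; rewrite mem_natrange => Hi; rewrite phi_shift; lia.
  move=> /andP[x0 xm]; case: (leqP x (deg g)) => xg; first by rewrite x0.
  apply/orP; right; apply/imfsetP; exists (x - deg g).
    by rewrite /= mem_natrange; lia.
  by rewrite phi_shift; lia.
by rewrite card_natrange.
Qed.

Fixpoint catw (w : seq scomp) : scomp :=
  if w is g :: w' then sconcat g (catw w') else [::].

Fixpoint terms (w : seq scomp) : seq scomp :=
  if w is g :: w' then flatten [seq shuffle_terms g T | T <- terms w'] else [:: [::]].

Lemma monomial_terms w : monomial w = [seq (1%R, T) | T <- terms w].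
Proof.
elim: w => [|g w IH] //=.
rewrite IH /tmul /basis_el /= cats0 map_flatten -!map_comp.
by congr flatten; apply: eq_map => T /=; apply: eq_map => S0 /=.
Qed.

Lemma gen_props g : generator g -> [/\ is_comp (deg g) g, g != [::] & reduced (deg g) g].
Proof.
case=> n [cn gn rn]; have dn := deg_comp cn; subst n.
by split => //; apply/eqP.
Qed.

Lemma count_unique2 (T : eqType) (a : pred T) (l : seq T) y0 :
  (forall y, a y -> y = y0) -> count a l = count_mem y0 l * a y0.
Proof.
move=> H; elim: l => [|y l IH] //=; rewrite IH mulnDl; congr (_ + _).
case ay: (a y); first by rewrite (H y ay) eqxx -(H y ay) ay.
by case: (y =P y0) => [ey|] //=; rewrite -ey ay.
Qed.

Lemma sumn_bool (T : Type) (a : pred T) l : sumn [seq nat_of_bool (a x) | x <- l] = count a l.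
Proof. by elim: l => [|x l IH] //=; rewrite IH. Qed.

Lemma terms_props w : (forall g, g \in w -> generator g) ->
  [/\ (forall R, R \in terms w -> is_comp (deg R) R /\ nf R <= size w),
      is_comp (deg (catw w)) (catw w), nf (catw w) = size w &
      (forall R, nf R = size w -> count_mem R (terms w) = (R == catw w))].
Proof.
elim: w => [|g v IH] Hg.
  split => //=.
  - by move=> R; rewrite inE => /eqP ->; split; [exact: comp_nil|].
  - exact: comp_nil.
  - by move=> R; rewrite /nf; case: R.
have [cg gn rg] := gen_props (Hg g (mem_head _ _)).
have [IH1 IH2 IH3 IH4] := IH (fun h hv => Hg h (@mem_behead _ (g :: v) h hv)).
have Hmem : forall R, R \in terms (g :: v) -> exists2 T, T \in terms v & cond g T R.
  move=> R /flattenP [s /mapP [T Tv ->] RT]; exists T => //.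
  by rewrite -mem_shuffle //; case: (IH1 T Tv).
split.
- move=> R /Hmem [T Tv Hc]; split; first exact: cond_comp Hc.
  apply: (leq_trans (nf_le cg gn rg Hc)) => /=.
  have [_ nT] := IH1 T Tv.
  case: (_ == _) => /=; first by rewrite add1n ltnS.
  by rewrite add0n (leq_trans nT).
- by apply: cond_comp (sconcat_cond cg IH2).
- by rewrite /= nf_sconcat // IH3.
move=> R nR /=.
transitivity (sumn [seq nat_of_bool (cond g T R) | T <- terms v]).
  rewrite count_flatten -map_comp; congr sumn; apply/eq_in_map => T Tv /=.
  by rewrite shuffle_count //; case: (IH1 T Tv).
rewrite sumn_bool (@count_unique2 _ _ _ (std (drop (size g) R))); last first.
  by move=> T /and3P[_ _ /eqP].
set T1 := std (drop (size g) R).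
set C := catw v.
have F1 : R = sconcat g C -> cond g C R /\ T1 = C.
  move=> eR; have Hc' := sconcat_cond cg IH2; rewrite -/C -eR in Hc'.
  by split => //; case/and3P: Hc' => _ _ /eqP.
case Hc: (cond g T1 R); last first.
  rewrite muln0; case: (R =P sconcat g C) => [eR|//].
  by have [h1 h2] := F1 eR; rewrite h2 h1 in Hc.
rewrite muln1.
case: (ltnP 0 (count_mem T1 (terms v))) => cT; last first.
  move: cT; rewrite leqn0 => /eqP c0; rewrite c0; case: (R =P sconcat g C) => [eR|//].
  have [h1 h2] := F1 eR.
  by move: c0; rewrite h2 (IH4 _ IH3) eqxx.
have T1v : T1 \in terms v by rewrite -has_pred1 has_count.
have [_ nT1] := IH1 T1 T1v.
have := nf_le cg gn rg Hc; rewrite nR /=.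
case bU: (bunion (take (size g) R) == natrange (deg g)); last first.
  by rewrite add0n => H; move: (leq_trans H nT1); rewrite ltnn.
rewrite add1n ltnS => H; have nT1e : nf T1 = size v by apply/eqP; rewrite eqn_leq nT1 H.
rewrite IH4 // in cT *.
have eT1 : T1 = C by apply/eqP; case: (T1 == C) cT.
rewrite eT1 eqxx.
by rewrite (cond_sconcat_eq cg Hc (eqP bU)) eT1 eqxx.
Qed.

End PartH.

Section PartI.
Local Open Scope fset_scope.
Local Open Scope nat_scope.

Definition genw (w : seq scomp) := forall g, g \in w -> generator g.

Lemma genw_cons g v : genw (g :: v) -> generator g /\ genw v.
Proof.
move=> H; split; first exact: H (mem_head _ _).
by move=> h hv; apply: H; rewrite in_cons hv orbT.
Qed.

Lemma sconcat_nil g T : g != [::] -> sconcat g T != [::].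
Proof. by rewrite sconcatE; case: g. Qed.

Lemma catw_inj w w' : genw w -> genw w' -> catw w = catw w' -> w = w'.
Proof.
elim: w w' => [|g v IH] [|g' v'] //= Hw Hw'.
- have [/gen_props[_ gn _] _] := genw_cons Hw'.
  by move/esym/eqP; rewrite (negbTE (sconcat_nil _ gn)).
- have [/gen_props[_ gn _] _] := genw_cons Hw.
  by move/eqP; rewrite (negbTE (sconcat_nil _ gn)).
have [/gen_props[cg gn rg] Hv] := genw_cons Hw.
have [/gen_props[cg' gn' rg'] Hv'] := genw_cons Hw'.
have [_ cC _ _] := terms_props Hv.
have [_ cC' _ _] := terms_props Hv'.
move=> eR.
have Hc := sconcat_cond cg cC; have Hc' := sconcat_cond cg' cC'.
rewrite eR in Hc.
set R := sconcat g' (catw v') in Hc Hc'.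
have cut1 : cutp R (size g).
  by rewrite (cut_at Hc) /R -eR sconcatE take_size_cat // (comp_bunion cg).
have cut2 : cutp R (size g').
  by rewrite (cut_at Hc') /R sconcatE take_size_cat // (comp_bunion cg').
have sg : size g = size g'.
  case: (ltngtP (size g) (size g')) => // H.
  - have := cut_small cg' rg' Hc' (a := size g); rewrite cut1 H lt0n size_eq0 gn.
    by move=> /(_ isT).
  - have := cut_small cg rg Hc (a := size g'); rewrite cut2 H lt0n size_eq0 gn'.
    by move=> /(_ isT).
have eg : g = g'.
  move: Hc Hc' => /and3P[cR /eqP e1 _] /and3P[_ /eqP e1' _].
  by rewrite -e1 -e1' sg.
subst g'.
have eC : catw v = catw v'.
  by move: Hc Hc' => /and3P[_ _ /eqP e2] /and3P[_ _ /eqP e2']; rewrite -e2 -e2'.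
by rewrite (IH v' Hv Hv' eC).
Qed.

Lemma factor_ex k P n : size P <= k -> is_comp n P ->
  exists w, genw w /\ catw w = P.
Proof.
elim: k P n => [|k IH] P n.
  by rewrite leqn0 size_eq0 => /eqP -> _; exists [::].
move=> sP cP.
case: P sP cP => [|B P0] sP cP; first by exists [::].
set P := B :: P0 in sP cP *.
have sR := comp_sc cP; have bR := comp_bunion cP.
have exP : exists a, (0 < a) && cutp P a.
  exists (size P); apply/andP; split; first by [].
  by rewrite /cutp take_size bR card_natrange.
case: (ex_minnP exP) => k0 /andP[k00 ck0] kmin.
have k0P : k0 <= size P.
  by apply: kmin; apply/andP; split; [by [] | rewrite /cutp take_size bR card_natrange].
set g := take k0 P; set D := drop k0 P; set T := std D.
have [m bg] : exists m, bunion g = natrange m.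
  by exists #|` bunion g|; apply/eqP.
have sg : sc g by apply: sc_take.
have dg : deg g = m by rewrite deg_sc // bg card_natrange.
have cg : is_comp (deg g) g by rewrite dg /is_comp is_setcompE sg bg eqxx.
have sgk : size g = k0 by rewrite size_takel.
have gn : g != [::] by rewrite -size_eq0 sgk -lt0n.
have rg : reduced (deg g) g.
  case=> a [m' [a1 ak _ bga]].
  have ta : take a g = take a P by rewrite /g take_takel // -sgk ltnW.
  have : k0 <= a.
    apply: kmin; rewrite a1 /= /cutp -ta bga card_natrange.
    by [].
  by rewrite -sgk leqNgt ak.
have gg : generator g by exists (deg g); split => //; apply/eqP.
have sD := sc_drop k0 sR.
have cT : is_comp (deg T) T by rewrite /T deg_std comp_std.
have eP : sconcat g T = P.
  rewrite sconcatE /T deg_std /shset.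
  have -> : deg g + deg D = n by rewrite /g /D -deg_take_drop (deg_comp cP).
  rewrite -(comp_bunion cg) -(bunion_drop_eq _ cP) relabel_std.
  by rewrite cat_take_drop.
have sT : size T <= k.
  by rewrite /T size_std size_drop; move: sP; rewrite /= => sP; lia.
have [w' [gw' ew']] := IH T (deg T) sT cT.
exists (g :: w'); split; last by rewrite /= ew'.
by move=> h; rewrite in_cons => /orP[/eqP ->|hw]; [exact: gg | exact: gw'].
Qed.

End PartI.

Section PartJ.
Local Open Scope ring_scope.

Definition genok (c : seq (int * seq scomp)) :=
  forall e, e \in c -> forall g, g \in e.2 -> generator g.

Lemma tcoef_cat x y R : tcoef (x ++ y) R = tcoef x R + tcoef y R.
Proof. by rewrite /tcoef big_cat. Qed.

Lemma tcoef_nil R : tcoef [::] R = 0.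
Proof. by rewrite /tcoef big_nil. Qed.

Lemma tcoef_tscale a x R : tcoef (tscale a x) R = a * tcoef x R.
Proof.
rewrite !tcoefE /lin /tscale big_map mulr_sumr; apply: eq_bigr => e _ /=.
by rewrite mulrA.
Qed.

Lemma tcoef_lincomb c R : tcoef (lincomb c) R = \sum_(e <- c) e.1 * tcoef (monomial e.2) R.
Proof.
rewrite /lincomb tcoefE lin_flatten big_map; apply: eq_bigr => e _.
by rewrite -tcoefE tcoef_tscale.
Qed.

Lemma tcoef_monomial w R : tcoef (monomial w) R = (count_mem R (terms w))%:Z.
Proof. by rewrite monomial_terms tcoefE lin_pair sum_count mul1r. Qed.

Lemma tcoef_basis P R : tcoef (basis_el P) R = (P == R)%:R.
Proof. by rewrite tcoefE /lin big_cons big_nil addr0 mul1r. Qed.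

Lemma span_list (rest : seq scomp) :
  (forall T, T \in rest -> exists c, genok c /\ teq (basis_el T) (lincomb c)) ->
  exists c, genok c /\ forall R, tcoef (lincomb c) R = - (count_mem R rest)%:Z.
Proof.
elim: rest => [|T rest IH] H.
  by exists [::]; split => // R; rewrite tcoef_nil.
have [cT [gT eT]] := H T (mem_head _ _).
have [c' [g' e']] := IH (fun T' hT => H T' (@mem_behead _ (T :: rest) T' hT)).
exists ([seq (-1 * e.1, e.2) | e <- cT] ++ c'); split.
  move=> e; rewrite mem_cat => /orP[/mapP[e0 e0c ->]|ec]; last exact: g' ec.
  exact: gT e0c.
move=> R; rewrite /lincomb map_cat flatten_cat tcoef_cat -/(lincomb c') e'.
rewrite -/(lincomb _) tcoef_lincomb big_map.
have -> : \sum_(e <- cT) (-1 * e.1) * tcoef (monomial e.2) R = - tcoef (lincomb cT) R.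
  by rewrite tcoef_lincomb -sumrN; apply: eq_bigr => e _; ring.
rewrite -eT tcoef_basis /=.
by case: (T == R); rewrite /= ?add1n ?add0n ?PoszD; ring.
Qed.

Lemma count_split (l : seq scomp) P R : count_mem P l = 1%N ->
  count_mem R l = (count_mem R [seq x <- l | x != P] + (P == R))%N.
Proof.
move=> cP; rewrite count_filter.
case: (P =P R) => [<-|nPR].
  rewrite cP; have -> : count (predI (pred1 P) (fun x => x != P)) l = 0%N.
    by apply/eqP; rewrite -leqn0 leqNgt -has_count; apply/hasPn => x /=; case: eqP => // ->; rewrite eqxx.
  by [].
rewrite addn0; apply: eq_count => x /=; case: (x =P R) => // ->.
by case: (R =P P) => // eRP; exfalso; apply: nPR.
Qed.

Lemma span_all k P : (nf P < k)%N -> in_Comp P ->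
  exists c, genok c /\ teq (basis_el P) (lincomb c).
Proof.
elim: k P => [|k IH] P //.
move=> nP [n cP].
have [w [gw ew]] := factor_ex (leqnn (size P)) cP.
have [T1p T2p T3p T4p] := terms_props gw.
rewrite ew in T2p T3p T4p.
set rest := [seq x <- terms w | x != P].
have Hrest : forall T, T \in rest -> exists c, genok c /\ teq (basis_el T) (lincomb c).
  move=> T; rewrite mem_filter => /andP[TP Tw].
  have [cT nT] := T1p T Tw.
  apply: IH; last by exists (deg T).
  rewrite -ltnS (leq_trans _ nP) // ltnS T3p ltn_neqAle nT andbT.
  apply/negP => /eqP nTe; have := T4p T nTe; rewrite (negbTE TP).
  by move/eqP; rewrite -leqn0 leqNgt -has_count has_pred1 Tw.
have [c' [g' e']] := span_list Hrest.
exists ((1, w) :: c'); split.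
  move=> e; rewrite in_cons => /orP[/eqP -> /=|ec]; last exact: g' ec.
  exact: gw.
move=> R; rewrite /lincomb /= tcoef_cat -/(lincomb c') e' tcoef_tscale mul1r.
rewrite tcoef_monomial tcoef_basis (@count_split _ P R); last by rewrite T4p // eqxx.
by rewrite PoszD; case: (P == R); ring.
Qed.

Lemma sum_uniq_snd (c : seq (int * seq scomp)) e0 : uniq (map snd c) -> e0 \in c ->
  \sum_(e <- c) e.1 * (e.2 == e0.2)%:R = e0.1.
Proof.
elim: c => [|e c IH] //= /andP[ec uc]; rewrite in_cons big_cons.
case: (e.2 =P e0.2) => [ee|ne].
  move=> /orP[/eqP <-|e0c]; last first.
    by exfalso; move: ec; rewrite ee => /negP; apply; apply/mapP; exists e0.
  rewrite mulr1 big1_seq ?addr0 // => e' /andP[_ e'c].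
  rewrite -ee; case E: (e'.2 == e.2); last by rewrite mulr0.
  by exfalso; move/negP: ec; apply; apply/mapP; exists e'; rewrite // (eqP E).
move=> /orP[/eqP ee|e0c]; first by rewrite ee in ne.
by rewrite mulr0 add0r IH.
Qed.

Lemma indep c : uniq (map snd c) -> genok c -> teq (lincomb c) [::] ->
  forall e, e \in c -> e.1 = 0.
Proof.
move=> uc gc tc e0 e0c; apply/eqP; apply/negPn/negP => e0n.
pose Pn := fun n => has (fun e : int * seq scomp => (e.1 != 0) && (size e.2 == n)) c.
have exP : exists n, Pn n.
  by exists (size e0.2); apply/hasP; exists e0 => //; rewrite e0n eqxx.
have ubP : forall n, Pn n -> (n <= \max_(e <- c) size e.2)%N.
  move=> n /hasP[e ec /andP[_ /eqP <-]]; exact: (@leq_bigmax_seq _ c xpredT (fun e : int * seq scomp => size e.2) e ec).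
case: (ex_maxnP exP ubP) => L /hasP[es esc /andP[esn /eqP esL]] Lmax.
set R := catw es.2.
have ges : genw es.2 by move=> g; apply: gc.
have [_ _ nR _] := terms_props ges; rewrite -/R esL in nR.
have := tc R; rewrite tcoef_nil tcoef_lincomb.
rewrite (eq_big_seq (fun e => e.1 * (e.2 == es.2)%:R)); last first.
  move=> e ec; case: (e.1 =P 0) => [->|/eqP en]; first by rewrite !mul0r.
  have ge : genw e.2 by move=> g; apply: gc.
  have [T1 _ _ T4] := terms_props ge.
  have sL : (size e.2 <= L)%N by apply: Lmax; apply/hasP; exists e => //; rewrite en eqxx.
  rewrite tcoef_monomial; congr (_ * _).
  move: sL; rewrite leq_eqVlt => /orP[/eqP sL|sL].
    rewrite T4 ?nR -?sL //; case: (R =P catw e.2) => [eR|nRe]; last first.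
      by case: (e.2 =P es.2) => // ee; exfalso; apply: nRe; rewrite /R ee.
    by rewrite (catw_inj ge ges (esym eR)) eqxx.
  have -> : count_mem R (terms e.2) = 0%N.
    apply/eqP; rewrite -leqn0 leqNgt -has_count has_pred1; apply/negP => Rin.
    have [_ nle] := T1 R Rin; move: nle; rewrite nR leqNgt sL.
    by [].
  by case: (e.2 =P es.2) => // ee; move: sL; rewrite ee esL ltnn.
by rewrite sum_uniq_snd // => /eqP; rewrite (negbTE esn).
Qed.

End PartJ.

Theorem theorem3p4 :
  (* (T_bullet, hat-ast) is an associative unital algebra *)
  (forall x y z, valid x -> valid y -> valid z ->
     teq (tmul (tmul x y) z) (tmul x (tmul y z))) /\
  (forall x, valid x -> teq (tmul tunit x) x /\ teq (tmul x tunit) x) /\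
  (* the monomials in the generators span T_bullet *)
  (forall P, in_Comp P ->
     exists c : seq (int * seq scomp),
       (forall e, e \in c -> forall g, g \in e.2 -> generator g) /\
       teq (basis_el P) (lincomb c)) /\
  (* distinct monomials in the generators are linearly independent *)
  (forall c : seq (int * seq scomp),
     uniq (map snd c) ->
     (forall e, e \in c -> forall g, g \in e.2 -> generator g) ->
     teq (lincomb c) [::] ->
     forall e, e \in c -> e.1 = 0%R).
Proof.
split; first exact: tmul_assoc.
split; first exact: tmul_unit.
split.
- move=> P HP; exact: (span_all (ltnSn (nf P)) HP).
- move=> c uc gc tc; exact: indep uc gc tc.
Qed.
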